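(* Let $H$ be a non-transitive tournament with $6$ vertices. If $H$ contains twins or has a non-trivial automorphism, then $H$ is not quasirandom-forcing.
   Context: A tournament is an orientation of a complete graph; $\mathrm{Aut}(H)$ is its automorphism group. Two vertices $u,v$ of a tournament are twins if every out-neighbor of $u$, possibly except $v$, is an out-neighbor of $v$, and every out-neighbor of $v$, possibly except $u$, is an out-neighbor of $u$. For tournaments $H,G$, $d(H,G)$ is the probability that $\lvert H\rvert$ uniformly random distinct vertices of $G$ induce a tournament isomorphic to $H$ (and $0$ if $\lvert H\rvert>\lvert G\rvert$). A sequence $(G_n)$ of tournaments with $\lvert G_n\rvert\to\infty$ is quasirandom if $\lim_{n\to\infty} d(F,G_n)=\frac{m!}{\lvert\mathrm{Aut}(F)\rvert}2^{-\binom{m}{2}}$ for every tournament $F$ with $m$ vertices. A $k$-vertex tournament $H$ is quasirandom-forcing if every sequence $(G_n)$ of tournaments with $\lvert G_n\rvert\to\infty$ and $\lim_{n\to\infty} d(H,G_n)=\frac{k!}{\lvert\mathrm{Aut}(H)\rvert}2^{-\binom{k}{2}}$ is quasirandom. *)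

(* Defs.v *)
From mathcomp Require Import all_boot all_fingroup.
From Stdlib Require Import Reals.

Unset Implicit Arguments.
Unset Strict Implicit.
Unset Printing Implicit Defensive.

Record tournament := Tournament {
  tvcount : nat;
  tadj : rel 'I_tvcount;   (* tadj i j : the edge is oriented i -> j *)
  tadj_irr : forall i, ~~ tadj i i;
  tadj_tot : forall i j, i != j -> tadj i j = ~~ tadj j i }.
Arguments tadj : clear implicits.

Definition is_aut (H : tournament) (s : {perm 'I_(tvcount H)}) : bool :=
  [forall i, [forall j, tadj H (s i) (s j) == tadj H i j]].

Definition aut_card (H : tournament) : nat :=
  #|[set s : {perm 'I_(tvcount H)} | is_aut H s]|.

Definition has_nontrivial_aut (H : tournament) : Prop :=
  exists s : {perm 'I_(tvcount H)}, s != 1%g /\ is_aut H s.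

Definition transitive_tournament (H : tournament) : Prop :=
  forall a b c, tadj H a b -> tadj H b c -> tadj H a c.

Definition twins (H : tournament) (u v : 'I_(tvcount H)) : Prop :=
  u != v /\
  (forall w, w != v -> tadj H u w -> tadj H v w) /\
  (forall w, w != u -> tadj H v w -> tadj H u w).

Definition has_twins (H : tournament) : Prop :=
  exists u v, twins H u v.

Definition induces_copy (H G : tournament)
  (f : {ffun 'I_(tvcount H) -> 'I_(tvcount G)}) : bool :=
  injectiveb f &&
  [exists s : {perm 'I_(tvcount H)},
     [forall i, [forall j, tadj H i j == tadj G (f (s i)) (f (s j))]]].

(* d(H,G): probability that |H| uniformly random distinct vertices of G
   induce a tournament isomorphic to H (0 if |H| > |G|). *)
Definition dens (H G : tournament) : R :=
  if (tvcount G < tvcount H)%N then 0%R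
  else (INR #|[set f | induces_copy H G f]| / INR (tvcount G ^_ tvcount H))%R.

Definition rand_dens (F : tournament) : R :=
  (INR (tvcount F)`! / INR (aut_card F) * / (2 ^ 'C(tvcount F, 2)))%R.

Definition size_to_infty (G : nat -> tournament) : Prop :=
  forall M : nat, exists N : nat, forall n : nat, (N <= n)%N -> (M <= tvcount (G n))%N.

Definition quasirandom (G : nat -> tournament) : Prop :=
  size_to_infty G /\
  forall F : tournament, Un_cv (fun n => dens F (G n)) (rand_dens F).

Definition quasirandom_forcing (H : tournament) : Prop :=
  forall G : nat -> tournament,
    size_to_infty G ->
    Un_cv (fun n => dens H (G n)) (rand_dens H) ->
    quasirandom G.

(* Main.v *)
Require Import Defs.
From Stdlib Require Import Reals Lra.
From mathcomp Require Import all_boot all_fingroup.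
From mathcomp Require Import zify.
Set Implicit Arguments. Unset Strict Implicit. Unset Printing Implicit Defensive.

Lemma card_fam (aT rT : finType) (F : aT -> pred rT) :
  #|(family F : simpl_pred {ffun aT -> rT})| = \prod_(x : aT) #|F x|.
Proof.
rewrite card_family foldrE big_map big_enum /=. by [].
Qed.

Lemma card_bigcup_le (I T : finType) (A : I -> {set T}) :
  #|\bigcup_i A i| <= \sum_i #|A i|.
Proof.
elim/big_rec2: _ => [|i m U _ IH]; first by rewrite cards0.
by rewrite (leq_trans (leq_card_setU _ _).1) // leq_add2l.
Qed.

Lemma card_fix (n N : nat) (i : 'I_n) (x : 'I_N) :
  #|[set f : {ffun 'I_n -> 'I_N} | f i == x]| = N ^ n.-1.
Proof.
pose F := fun j : 'I_n => if j == i then pred1 x else predT.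
have -> : #|[set f : {ffun 'I_n -> 'I_N} | f i == x]| = #|(family F : simpl_pred {ffun 'I_n -> 'I_N})|.
  apply: eq_card => f; rewrite inE; apply/idP/familyP.
    move=> /eqP fi j; rewrite /F; case: eqP => [->|] //=; rewrite inE fi //.
  by move=> /(_ i); rewrite /F eqxx inE.
rewrite card_fam (bigD1 i) //= /F eqxx card1 mul1n.
rewrite (eq_bigr (fun _ => N)); last first.
  by move=> j /negbTE ->; rewrite card_ord.
rewrite prod_nat_const cardC1 card_ord. by [].
Qed.

Definition cnt (H : tournament) (N : nat) (E : rel 'I_N) : nat :=
  #|[set f : {ffun 'I_(tvcount H) -> 'I_N} | injectiveb f &&
     [exists s : {perm 'I_(tvcount H)},
       [forall i, [forall j, tadj H i j == E (f (s i)) (f (s j))]]]]|.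

Lemma cnt_change H N (E1 E2 : rel 'I_N) (x : 'I_N) :
  (forall a b, a != x -> b != x -> E1 a b = E2 a b) ->
  cnt H E1 <= cnt H E2 + tvcount H * N ^ (tvcount H).-1.
Proof.
move=> hE.
set U := \bigcup_(i : 'I_(tvcount H)) [set f : {ffun 'I_(tvcount H) -> 'I_N} | f i == x].
have hU : #|U| <= tvcount H * N ^ (tvcount H).-1.
  rewrite (leq_trans (card_bigcup_le _)) //.
  rewrite (eq_bigr (fun _ => N ^ (tvcount H).-1)); last by move=> i _; rewrite card_fix.
  by rewrite sum_nat_const card_ord.
rewrite /cnt; set S1 := [set f | _]; set S2 := [set f | _].
apply: (leq_trans _ (leq_add (leqnn #|S2|) hU)).
apply: (leq_trans _ (leq_card_setU _ _).1).
apply: subset_leq_card; apply/subsetP => f.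
rewrite !inE => /andP[fi /existsP[s /forallP hs]].
apply/orP; case: (boolP (f \in U)) => [fU | nU]; first by right.
have fx : forall i, f i != x.
  move=> i; apply: contra nU => fix_; apply/bigcupP; exists i => //; by rewrite inE.
left; rewrite fi /=; apply/existsP; exists s; apply/forallP => i; apply/forallP => j.
by rewrite -hE ?fx //; move: (hs i) => /forallP /(_ j).
Qed.

Section Path.
Variable B : tournament.

Lemma path_irr k (i : 'I_(tvcount B)) :
  ~~ (if (i < k) && (i < k) then tadj B i i else (i < i)%N).
Proof. by case: ifP => _; rewrite ?tadj_irr ?ltnn. Qed.

Lemma path_tot k (i j : 'I_(tvcount B)) : i != j ->
  (if (i < k) && (j < k) then tadj B i j else (i < j)%N) =
  ~~ (if (j < k) && (i < k) then tadj B j i else (j < i)%N).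
Proof.
move=> ij; rewrite andbC; case: ifP => _; first exact: tadj_tot.
by rewrite -leqNgt ltn_neqAle; move: ij; rewrite -val_eqE => ->.
Qed.

Definition pathT (k : nat) : tournament :=
  @Tournament (tvcount B)
    (fun a b => if (a < k) && (b < k) then tadj B a b else (a < b)%N)
    (path_irr k) (path_tot k).

Lemma pathT_step H k : k < tvcount B ->
  cnt H (tadj (pathT k.+1)) <= cnt H (tadj (pathT k)) + tvcount H * (tvcount B) ^ (tvcount H).-1 /\
  cnt H (tadj (pathT k)) <= cnt H (tadj (pathT k.+1)) + tvcount H * (tvcount B) ^ (tvcount H).-1.
Proof.
move=> kN; have hE : forall a b : 'I_(tvcount B), a != Ordinal kN -> b != Ordinal kN ->
   tadj (pathT k.+1) a b = tadj (pathT k) a b.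
  have hk : forall a : nat, a != k -> (a < k.+1) = (a < k).
    by move=> a ha; rewrite ltnS leq_eqVlt (negbTE ha).
  move=> a b; rewrite -!val_eqE /= => ha hb.
  by rewrite (hk _ ha) (hk _ hb).
split; apply: (@cnt_change H _ _ _ (Ordinal kN)) => a b ha hb; rewrite hE //.
Qed.

Lemma pathT_N : forall a b : 'I_(tvcount B), tadj (pathT (tvcount B)) a b = tadj B a b.
Proof. by move=> a b /=; rewrite !ltn_ord. Qed.

End Path.

Lemma cnt_trans0 H N (E : rel 'I_N) :
  ~ transitive_tournament H -> (forall a b c, E a b -> E b c -> E a c) -> cnt H E = 0.
Proof.
move=> nT tE; apply: eq_card0 => f; rewrite inE; apply/negP => /andP[_ /existsP[s /forallP hs]].
apply: nT => a b c hab hbc.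
have h : forall i j, tadj H i j = E (f (s i)) (f (s j)).
  by move=> i j; move: (hs i) => /forallP /(_ j) /eqP.
rewrite h in hab; rewrite h in hbc; rewrite h; exact: tE hab hbc.
Qed.

Lemma ivt_disc (d : nat -> R) (t del : R) (N : nat) :
  Rlt (d 0) t -> Rle t (d N) ->
  (forall k, k < N -> Rle (Rabs (Rminus (d k.+1) (d k))) del) ->
  exists k, k <= N /\ Rle (Rabs (Rminus (d k) t)) del.
Proof.
elim: N => [|N IH] h0 hN hs; first by lra.
case: (Rle_lt_dec t (d N)) => hdN.
  have [k [kN hk]] := IH h0 hdN (fun k kN => hs k (ltnW kN)).
  by exists k; split => //; apply: leqW.
exists N.+1; split => //.
have hb := hs N (ltnSn N).
move: hb; rewrite /Rabs; case: Rcase_abs => c1 hb; case: Rcase_abs => c2; lra.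
Qed.

Lemma cnt_lower H N (E : rel 'I_N) (S : {set {ffun 'I_(tvcount H) -> 'I_N}}) :
  (forall g, g \in S -> injective g /\ forall i j, tadj H i j = E (g i) (g j)) ->
  (forall g g' (s s' : {perm 'I_(tvcount H)}), g \in S -> g' \in S ->
      (forall i, g (s i) = g' (s' i)) -> s = s') ->
  (tvcount H)`! * #|S| <= cnt H E.
Proof.
move=> hS hinj.
pose Phi (p : {perm 'I_(tvcount H)} * {ffun 'I_(tvcount H) -> 'I_N}) :=
  [ffun i => p.2 (p.1 i)].
have -> : (tvcount H)`! * #|S| = #|Phi @: setX [set: {perm 'I_(tvcount H)}] S|.
  rewrite card_in_imset; first by rewrite cardsX cardsT card_Sn.
  move=> [s g] [s' g']; rewrite !inE /= => gS g'S /ffunP hP.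
  have e : forall i, g (s i) = g' (s' i) by move=> i; move: (hP i); rewrite !ffunE.
  have ss := hinj _ _ _ _ gS g'S e; subst s'.
  congr pair; apply/ffunP => j; move: (e (s^-1 j)%g); by rewrite permKV.
apply: subset_leq_card; apply/subsetP => f /imsetP [[s g]]; rewrite !inE /= => gS ->.
have [gi ge] := hS g gS.
apply/andP; split.
  apply/injectiveP => i j; rewrite !ffunE => /gi /perm_inj //.
apply/existsP; exists (s^-1)%g; apply/forallP => i; apply/forallP => j.
by rewrite !ffunE !permKV ge.
Qed.

Lemma card_div N d c : 0 < d -> c.+1 * d <= N ->
  #|[pred a : 'I_N | a %/ d == c]| = d.
Proof.
move=> d0 hN.
have -> : #|[pred a : 'I_N | a %/ d == c]| = count (fun a => a %/ d == c) (iota 0 N).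
  by rewrite -val_enum_ord count_map cardE size_filter enumT; apply: eq_count.
have -> : N = c * d + (d + (N - c.+1 * d)) by rewrite addnA -mulSnr subnKC.
rewrite iotaD iotaD !count_cat /= add0n.
have h1 : count (fun a => a %/ d == c) (iota 0 (c * d)) = 0.
  apply/eqP; rewrite -leqn0 leqNgt -has_count; apply/hasPn => a; rewrite mem_iota /= add0n => ha.
  by rewrite neq_ltn ltn_divLR // ha.
have h3 : count (fun a => a %/ d == c) (iota (c * d + d) (N - c.+1 * d)) = 0.
  apply/eqP; rewrite -leqn0 leqNgt -has_count; apply/hasPn => a; rewrite mem_iota /= => /andP[ha _].
  by rewrite neq_ltn leq_divRL // mulSnr ha orbT.
rewrite h1 h3 addn0 add0n.
transitivity (count predT (iota (c * d) d)); last by rewrite count_predT size_iota.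
apply: eq_in_count.
move=> a; rewrite mem_iota => /andP[ha hb] /=.
by rewrite eqn_leq -ltnS ltn_divLR // mulSnr hb leq_divRL // ha.
Qed.

Section Blow.
Variable adj : rel 'I_6.
Hypothesis adj_irr : forall i, ~~ adj i i.
Hypothesis adj_tot : forall i j, i != j -> adj i j = ~~ adj j i.
Variable r : nat.

Definition p6 (a : 'I_(12 * r)) : 'I_6 := inord (a %/ (2 * r)).

Lemma r_pos (a : 'I_(12 * r)) : 0 < r.
Proof. case: r a => [|//] [a ha]; by rewrite muln0 in ha. Qed.

Lemma p6E (a : 'I_(12 * r)) : (p6 a : nat) = a %/ (2 * r).
Proof.
rewrite /p6 inordK // ltn_divLR; last by rewrite muln_gt0 (r_pos a).
by rewrite mulnA.
Qed.

Definition Bf (a b : 'I_(12 * r)) : bool :=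
  if p6 a == p6 b then (a < b)%N else adj (p6 a) (p6 b).

Lemma Bf_irr a : ~~ Bf a a.
Proof. by rewrite /Bf eqxx ltnn. Qed.

Lemma Bf_tot a b : a != b -> Bf a b = ~~ Bf b a.
Proof.
move=> ab; rewrite /Bf [p6 b == p6 a]eq_sym; case: eqP => [_|/eqP ne]; last exact: adj_tot ne.
by rewrite -leqNgt ltn_neqAle; move: ab; rewrite -val_eqE => ->.
Qed.

Definition Bt : tournament := @Tournament (12 * r) Bf Bf_irr Bf_tot.

Lemma emb_gen (g : {ffun 'I_6 -> 'I_(12 * r)}) (pi : 'I_6 -> 'I_6) :
  (forall i, p6 (g i) = pi i) ->
  (forall i j, pi i != pi j -> adj (pi i) (pi j) = adj i j) ->
  (forall i j, i != j -> pi i = pi j -> (g i < g j)%N = adj i j) ->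
  injective g /\ forall i j, adj i j = Bf (g i) (g j).
Proof.
move=> hp h2 h3; split.
  move=> i j e; apply/eqP; apply: contraT => ij.
  case: (eqVneq (pi i) (pi j)) => [pe|pne].
    have := h3 _ _ ij pe; have := h3 j i; rewrite eq_sym ij => /(_ isT (esym pe)).
    rewrite e ltnn adj_tot; [by move=> a b; rewrite -b in a | by rewrite eq_sym].
  by move: pne; rewrite -!hp e eqxx.
move=> i j; rewrite /Bf !hp; case: eqP => [pe|/eqP pne]; last by rewrite h2.
case: (eqVneq i j) => [->|ij]; first by rewrite ltnn (negbTE (adj_irr _)).
by rewrite h3.
Qed.

Lemma Q_inj (u v : 'I_6) (g g' : {ffun 'I_6 -> 'I_(12 * r)}) (s s' : {perm 'I_6}) :
  u != v ->
  (forall w, w != u -> w != v -> p6 (g w) = w) ->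
  (forall w, w != u -> w != v -> p6 (g' w) = w) ->
  (forall x, (x == u) || (x == v) -> (p6 (g x) == u) || (p6 (g x) == v)) ->
  (forall x, (x == u) || (x == v) -> (p6 (g' x) == u) || (p6 (g' x) == v)) ->
  (forall i j, adj i j = Bf (g i) (g j)) ->
  (forall i j, adj i j = Bf (g' i) (g' j)) ->
  (forall i, g (s i) = g' (s' i)) -> s = s'.
Proof.
move=> uv pg pg' ug ug' eg eg' e.
have c1 : forall i, ~~ ((s i == u) || (s i == v)) -> s' i = s i.
  move=> i; rewrite negb_or => /andP[a b].
  case: (boolP ((s' i == u) || (s' i == v))) => h.
    have := ug' _ h; rewrite -e pg //; by rewrite (negbTE a) (negbTE b).
  move: h; rewrite negb_or => /andP[c d].
  by move: (e i) => /(congr1 p6); rewrite pg // pg'.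
have c2 : forall i, (s i == u) || (s i == v) -> (s' i == u) || (s' i == v).
  move=> i h; have := ug _ h; rewrite e => h'.
  apply: contraT; rewrite negb_or => /andP[c d].
  by move: h'; rewrite pg' // (negbTE c) (negbTE d).
set iu := (s^-1)%g u; set iv := (s^-1)%g v.
have siu : s iu = u by rewrite permKV.
have siv : s iv = v by rewrite permKV.
have hu := c2 iu; rewrite siu eqxx /= in hu; have {}hu := hu isT.
have hv := c2 iv; rewrite siv eqxx orbT in hv; have {}hv := hv isT.
have nuv : s' iu != s' iv.
  apply: contra uv => /eqP /perm_inj /(congr1 s); by rewrite siu siv => ->.
have [e1 e2] : s' iu = u /\ s' iv = v.
  case/orP: hu => /eqP hu.
    case/orP: hv => /eqP hv; first by move: nuv; rewrite hu hv eqxx.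
    by split.
  exfalso.
  case/orP: hv => /eqP hv; last by move: nuv; rewrite hu hv eqxx.
  have a1 : g u = g' v by rewrite -siu e hu.
  have a2 : g v = g' u by rewrite -siv e hv.
  have := eg u v; rewrite a1 a2 -eg' adj_tot //.
  by case: (adj v u).
apply/permP => i.
case: (boolP ((s i == u) || (s i == v))) => h; last by rewrite c1.
case/orP: h => /eqP h.
  have -> : i = iu by rewrite /iu -h permK.
  by rewrite siu e1.
have -> : i = iv by rewrite /iv -h permK.
by rewrite siv e2.
Qed.


Definition H6 : tournament := @Tournament 6 adj adj_irr adj_tot.

Lemma p6_eq (a : 'I_(12 * r)) (w : 'I_6) : (p6 a == w) = (a %/ (2 * r) == w).
Proof. by rewrite -val_eqE /= p6E. Qed.

Lemma card_part (w : 'I_6) : 0 < r -> #|[pred a : 'I_(12 * r) | p6 a == w]| = 2 * r.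
Proof.
move=> hr; rewrite -(@card_div (12 * r) (2 * r) w) ?muln_gt0 //.
  by apply: eq_card => a; rewrite !inE p6_eq.
rewrite mulnA leq_mul2r; apply/orP; right; have := ltn_ord w; lia.
Qed.

Lemma card_half (c : nat) : c < 12 -> 0 < r -> #|[pred a : 'I_(12 * r) | a %/ r == c]| = r.
Proof. by move=> hc hr; rewrite card_div // leq_mul2r hc orbT. Qed.

Lemma prod6 (u v : 'I_6) x y z : u != v ->
  \prod_(w : 'I_6) (if w == u then x else if w == v then y else z) = x * y * z ^ 4.
Proof.
move=> uv; rewrite (bigD1 u) //= eqxx (bigD1 v) /=; last by rewrite eq_sym.
rewrite eqxx eq_sym (negbTE uv) mulnA.
rewrite (eq_bigr (fun _ => z)); last first.
  by move=> w /andP[/negbTE -> /negbTE ->].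
have -> : \prod_(w | (w != u) && (w != v)) z = \prod_(w in [pred w : 'I_6 | (w != u) && (w != v)]) z by [].
rewrite prod_nat_const; congr (_ * _ ^ _).
have h5 : #|[pred w : 'I_6 | w != u]| = 5 by rewrite cardC1 card_ord.
rewrite (cardD1 v) inE eq_sym uv /= add1n in h5.
have e4 : #|[predD1 [pred w : 'I_6 | w != u] & v]| = 4 by case: h5.
by apply: (etrans _ e4); apply: eq_card => w; rewrite !inE andbC.
Qed.


Lemma cnt_from (u v : 'I_6) (S : {set {ffun 'I_6 -> 'I_(12 * r)}}) : u != v ->
  (forall g, g \in S -> [/\ injective g, forall i j, adj i j = Bf (g i) (g j),
      forall w, w != u -> w != v -> p6 (g w) = w &
      forall x, (x == u) || (x == v) -> (p6 (g x) == u) || (p6 (g x) == v)]) ->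
  720 * #|S| <= cnt H6 Bf.
Proof.
move=> uv hS.
have -> : 720 = (tvcount H6)`! by [].
apply: cnt_lower.
  by move=> g /hS [].
move=> g g' s s' /hS [_ e1 p1 q1] /hS [_ e2 p2 q2].
exact: (Q_inj uv p1 p2 q1 q2 e1 e2).
Qed.

Lemma prod_const6 z : \prod_(w : 'I_6) z = z ^ 6.
Proof. by rewrite prod_nat_const card_ord. Qed.

Definition S1 := [set g : {ffun 'I_6 -> 'I_(12 * r)} | [forall w, p6 (g w) == w]].

Lemma card_S1 : 0 < r -> #|S1| = (2 * r) ^ 6.
Proof.
move=> hr.
have -> : #|S1| = #|(family (fun w => [pred a : 'I_(12 * r) | p6 a == w]) : simpl_pred {ffun 'I_6 -> 'I_(12 * r)})|.
  apply: eq_card => g; rewrite inE; apply/forallP/familyP => h w; by move: (h w).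
rewrite card_fam (eq_bigr (fun _ => 2 * r)); first exact: prod_const6.
by move=> w _; rewrite card_part.
Qed.

Lemma S1_good g : g \in S1 -> injective g /\ forall i j, adj i j = Bf (g i) (g j).
Proof.
rewrite inE => /forallP h.
apply: (@emb_gen g id) => //.
- by move=> i; apply/eqP.
- by move=> i j ij e; rewrite e eqxx in ij.
Qed.

Lemma cnt_aut : 0 < r -> 720 * (2 * r) ^ 6 <= cnt H6 Bf.
Proof.
move=> hr; rewrite -card_S1 //.
apply: (@cnt_from (Ordinal (isT : 0 < 6)) (Ordinal (isT : 1 < 6))) => // g gS.
have [gi ge] := S1_good gS.
move: gS; rewrite inE => /forallP h.
split => // [w _ _|x hx]; first by apply/eqP.
by rewrite (eqP (h x)).
Qed.


Lemma S1_conds (u v : 'I_6) g : g \in S1 ->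
  [/\ injective g, forall i j, adj i j = Bf (g i) (g j),
      forall w, w != u -> w != v -> p6 (g w) = w &
      forall x, (x == u) || (x == v) -> (p6 (g x) == u) || (p6 (g x) == v)].
Proof.
move=> gS; have [gi ge] := S1_good gS.
move: gS; rewrite inE => /forallP h.
split => // [w _ _|x hx]; first by apply/eqP.
by rewrite (eqP (h x)).
Qed.

Definition Fx (u v x : 'I_6) (w : 'I_6) : pred 'I_(12 * r) :=
  if w == u then [pred a : 'I_(12 * r) | a %/ r == 2 * x]
  else if w == v then [pred a : 'I_(12 * r) | a %/ r == (2 * x).+1]
  else [pred a | p6 a == w].

Definition Sx u v x := [set g : {ffun 'I_6 -> 'I_(12 * r)} | [forall w, g w \in Fx u v x w]].

Lemma card_Sx u v x : 0 < r -> u != v -> #|Sx u v x| = r * r * (2 * r) ^ 4.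
Proof.
move=> hr uv.
have -> : #|Sx u v x| = #|(family (Fx u v x) : simpl_pred {ffun 'I_6 -> 'I_(12 * r)})|.
  apply: eq_card => g; rewrite inE; apply/forallP/familyP => h w; by move: (h w).
rewrite card_fam -(prod6 _ _ _ uv).
apply: eq_bigr => w _; rewrite /Fx.
have xl := ltn_ord x.
case: (w == u); first by rewrite card_half //; lia.
case: (w == v); first by rewrite card_half //; lia.
exact: card_part.
Qed.

Lemma p6_half (a : 'I_(12 * r)) : (p6 a : nat) = (a %/ r) %/ 2.
Proof. by rewrite p6E (mulnC 2 r) divnMA. Qed.

Lemma Sx_conds u v x g : u != v ->
  (forall w, w != u -> w != v -> adj u w = adj v w) -> adj u v ->
  (x == u) || (x == v) -> g \in Sx u v x ->
  [/\ injective g, forall i j, adj i j = Bf (g i) (g j),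
      forall w, w != u -> w != v -> p6 (g w) = w &
      forall y, (y == u) || (y == v) -> (p6 (g y) == u) || (p6 (g y) == v)].
Proof.
move=> uv tw huv hx; rewrite inE => /forallP hg.
have tw2 : forall a b w, (a == u) || (a == v) -> (b == u) || (b == v) ->
    w != u -> w != v -> adj a w = adj b w /\ adj w a = adj w b.
  have t1 : forall a w, (a == u) || (a == v) -> w != u -> w != v -> adj a w = adj u w.
    by move=> a w /orP[] /eqP -> wu wv; rewrite ?tw.
  move=> a b w ha hb wu wv.
  have e : adj a w = adj b w by rewrite (t1 a) // (t1 b).
  split => //.
  have nin : forall c, (c == u) || (c == v) -> w != c by move=> c /orP[] /eqP ->.
  by rewrite adj_tot ?nin // [RHS]adj_tot ?nin // e.
pose pi w := if (w == u) || (w == v) then x else w.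
have hp : forall w, p6 (g w) = pi w.
  move=> w; have := hg w; rewrite /Fx /pi.
  case: (eqVneq w u) => [_|wu] /=.
    by rewrite inE => /eqP h; apply: val_inj; rewrite /= p6_half h; lia.
  case: (eqVneq w v) => [_|wv] /=.
    by rewrite inE => /eqP h; apply: val_inj; rewrite /= p6_half h; lia.
  by rewrite inE => /eqP.
have gu : (g u : nat) %/ r = 2 * x by move: (hg u); rewrite /Fx eqxx inE => /eqP.
have gv : (g v : nat) %/ r = (2 * x).+1.
  by move: (hg v); rewrite /Fx eq_sym (negbTE uv) eqxx inE => /eqP.
have guv : (g u < g v)%N.
  rewrite ltnNge; apply/negP => /(leq_div2r r); rewrite gu gv; lia.
have h2 : forall i j, pi i != pi j -> adj (pi i) (pi j) = adj i j.
  move=> i j; rewrite /pi.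
  case: (boolP ((i == u) || (i == v))) => hi; case: (boolP ((j == u) || (j == v))) => hj.
  - by rewrite eqxx.
  - move: hj; rewrite negb_or => /andP[j1 j2] _.
    by have [e _] := tw2 x i j hx hi j1 j2; rewrite e.
  - move: hi; rewrite negb_or => /andP[i1 i2] _.
    by have [_ e] := tw2 x j i hx hj i1 i2; rewrite e.
  - by [].
have h3 : forall i j, i != j -> pi i = pi j -> (g i < g j)%N = adj i j.
  move=> i j ij; rewrite /pi.
  case: (boolP ((i == u) || (i == v))) => hi; case: (boolP ((j == u) || (j == v))) => hj.
  - move=> _; case/orP: hi => /eqP ei; case/orP: hj => /eqP ej; subst i j.
    + by rewrite eqxx in ij.
    + by rewrite guv huv.
    + rewrite adj_tot // huv /=; apply/negbTE; rewrite -leqNgt ltnW //.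
    + by rewrite eqxx in ij.
  - by move=> e; rewrite -e hx in hj.
  - by move=> e; rewrite e hx in hi.
  - by move=> e; rewrite e eqxx in ij.
have [gi ge] := emb_gen hp h2 h3.
split => //.
  by move=> w wu wv; rewrite hp /pi (negbTE wu) (negbTE wv).
by move=> y hy; rewrite hp /pi hy.
Qed.


Lemma Sx_p6 u v x g : u != v -> g \in Sx u v x -> p6 (g u) = x /\ p6 (g v) = x.
Proof.
move=> uv; rewrite inE => /forallP hg.
have gu : (g u : nat) %/ r = 2 * x by move: (hg u); rewrite /Fx eqxx inE => /eqP.
have gv : (g v : nat) %/ r = (2 * x).+1.
  by move: (hg v); rewrite /Fx eq_sym (negbTE uv) eqxx inE => /eqP.
by split; apply: val_inj; rewrite /= p6_half ?gu ?gv; lia.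
Qed.

Lemma S1_p6 g w : g \in S1 -> p6 (g w) = w.
Proof. by rewrite inE => /forallP /(_ w) /eqP. Qed.

Lemma cnt_twin u v : 0 < r -> u != v ->
  (forall w, w != u -> w != v -> adj u w = adj v w) -> adj u v ->
  720 * ((2 * r) ^ 6 + r * r * (2 * r) ^ 4 + r * r * (2 * r) ^ 4) <= cnt H6 Bf.
Proof.
move=> hr uv tw huv.
have d1 : S1 :&: Sx u v u = set0.
  apply/setP => g; rewrite [in RHS]inE; apply/negbTE/negP; rewrite inE => /andP[g1 g2].
  have [_ e] := Sx_p6 uv g2; move: e; rewrite S1_p6 // => e; by rewrite e eqxx in uv.
have d2 : (S1 :|: Sx u v u) :&: Sx u v v = set0.
  apply/setP => g; rewrite [in RHS]inE; apply/negbTE/negP; rewrite inE => /andP[/setUP[g1|g1] g2];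
  have [e _] := Sx_p6 uv g2; move: e.
    by rewrite S1_p6 // => e; rewrite e eqxx in uv.
  by have [-> _] := Sx_p6 uv g1 => e; rewrite e eqxx in uv.
have -> : (2 * r) ^ 6 + r * r * (2 * r) ^ 4 + r * r * (2 * r) ^ 4 =
    #|S1 :|: Sx u v u :|: Sx u v v|.
  by rewrite cardsU d2 cards0 subn0 cardsU d1 cards0 subn0 card_S1 // !card_Sx.
apply: (cnt_from uv) => g /setUP [/setUP [g1|g1]|g1].
- exact: S1_conds.
- by apply: (Sx_conds uv tw huv _ g1); rewrite eqxx.
- by apply: (Sx_conds uv tw huv _ g1); rewrite eqxx orbT.
Qed.

End Blow.

Lemma Tk_irr k (i : 'I_k) : ~~ (i < i)%N.
Proof. by rewrite ltnn. Qed.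

Lemma Tk_tot k (i j : 'I_k) : i != j -> (i < j)%N = ~~ (j < i)%N.
Proof. by move=> ij; rewrite -leqNgt ltn_neqAle; move: ij; rewrite -val_eqE => ->. Qed.

Definition Tk (k : nat) : tournament := @Tournament k (fun i j => (i < j)%N) (@Tk_irr k) (@Tk_tot k).

Lemma sorted_lt K M (t : K.-tuple 'I_M) : sorted ltn (map val t) ->
  forall i j : 'I_K, (i < j)%N -> (tnth t i < tnth t j)%N.
Proof.
move=> st i j ij.
have hs : size (map val t) = K by rewrite size_map size_tuple.
have := @sorted_ltn_nth _ ltn ltn_trans 0 (map val t) st i j.
rewrite !inE hs !ltn_ord => /(_ isT isT ij).
by rewrite !(nth_map (tnth t i)) ?size_tuple // -!tnth_nth.
Qed.

Lemma cnt_Tk K M N (hMN : M <= N) (E : rel 'I_N) :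
  (forall a b : 'I_N, (a < M)%N -> (b < M)%N -> E a b = (a < b)%N) ->
  'C(M, K) <= cnt (Tk K) E.
Proof.
move=> hE.
rewrite -card_ltn_sorted_tuples.
pose phi (t : K.-tuple 'I_M) : {ffun 'I_(tvcount (Tk K)) -> 'I_N} :=
  [ffun i => widen_ord hMN (tnth t i)].
rewrite -(card_imset _ (f := phi)); last first.
  move=> t t' /ffunP e; apply: eq_from_tnth => i; move: (e i); rewrite !ffunE.
  by move/(congr1 val) => /= ?; apply: val_inj.
apply: subset_leq_card; apply/subsetP => f /imsetP [t]; rewrite inE => st ->.
have hlt := sorted_lt st.
have iff : forall i j : 'I_K, (tnth t i < tnth t j)%N = (i < j)%N.
  move=> i j; case: (ltngtP i j) => [h|h|h]; first exact: hlt.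
    by apply/negbTE; rewrite -leqNgt ltnW // hlt.
  have e : i = j by apply: val_inj.
  by rewrite e ltnn.
rewrite inE; apply/andP; split.
  apply/injectiveP => i j; rewrite !ffunE => /(congr1 val) /= e.
  apply: val_inj; case: (ltngtP i j) => // h.
    by have := hlt _ _ h; rewrite e ltnn.
  by have := hlt _ _ h; rewrite e ltnn.
apply/existsP; exists 1%g; apply/forallP => i; apply/forallP => j.
by rewrite !perm1 !ffunE hE //= iff.
Qed.

Delimit Scope R_scope with Re.
Lemma INR_expn m n : INR (m ^ n) = (INR m ^ n)%Re.
Proof. elim: n => [|n IH]; first by rewrite expn0. by rewrite expnS mult_INR IH. Qed.

Lemma div_le (a b c d : R) : Rlt 0 c -> Rlt 0 d -> Rle (a * d) (b * c) -> Rle (a / c) (b / d).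
Proof.
move=> hc hd h; rewrite /Rdiv.
apply: (Rmult_le_reg_r (c * d)); first by apply: Rmult_lt_0_compat.
have -> : (a * / c * (c * d) = a * d)%Re by field; lra.
have -> : (b * / d * (c * d) = b * c)%Re by field; lra.
exact: h.
Qed.

Lemma INR_pos n : 0 < n -> Rlt 0 (INR n).
Proof. by move=> h; apply: lt_0_INR; apply/ltP. Qed.

Lemma INR_leq m n : m <= n -> Rle (INR m) (INR n).
Proof. by move=> h; apply: le_INR; apply/leP. Qed.

Lemma cv_bound (u : nat -> R) (l c : R) :
  (forall n, Rle (Rabs (u n - l)) (c / INR n.+1)) -> Un_cv u l.
Proof.
move=> hb eps heps.
have [N hN] := INR_archimed eps (Rabs c) heps.
exists N => n hn; rewrite /R_dist.
apply: (Rle_lt_trans _ _ _ (hb n)).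
have hn1 : Rlt 0 (INR n.+1) by apply: INR_pos.
have hNn : Rle (INR N) (INR n.+1) by apply: le_INR; apply: le_S.
apply: (Rle_lt_trans _ (Rabs c / INR n.+1)).
  rewrite /Rdiv; apply: Rmult_le_compat_r; first by left; apply: Rinv_0_lt_compat.
  exact: Rle_abs.
apply: (Rmult_lt_reg_r (INR n.+1)) => //.
rewrite /Rdiv Rmult_assoc Rinv_l ?Rmult_1_r; last by apply: not_0_INR.
nra.
Qed.

Lemma dens_eq F G : dens F G =
  if tvcount G < tvcount F then 0%Re
  else (INR (cnt F (tadj G)) / INR (tvcount G ^_ tvcount F))%Re.
Proof. by []. Qed.

Lemma cnt_ext H N (E1 E2 : rel 'I_N) : (forall a b, E1 a b = E2 a b) -> cnt H E1 = cnt H E2.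
Proof.
move=> h; rewrite /cnt; apply: eq_card => f; rewrite !inE; congr (_ && _).
apply: eq_existsb => s; apply: eq_forallb => i; apply: eq_forallb => j; by rewrite h.
Qed.

Lemma aut_pos F : 0 < aut_card F.
Proof.
rewrite /aut_card card_gt0; apply/set0Pn; exists 1%g; rewrite inE.
by apply/forallP => i; apply/forallP => j; rewrite !perm1.
Qed.

Lemma aut_two F : has_nontrivial_aut F -> 1 < aut_card F.
Proof.
move=> [s [s1 hs]].
have sub : [set 1%g; s] \subset [set s0 : {perm 'I_(tvcount F)} | is_aut F s0].
  apply/subsetP => x; rewrite !inE => /orP[] /eqP -> //.
  by apply/forallP => i; apply/forallP => j; rewrite !perm1.
apply: leq_trans (subset_leq_card sub).
by rewrite cards2 eq_sym s1.
Qed.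

Lemma prod_ord_const m c : \prod_(i < m) c = c ^ m.
Proof. elim: m => [|m IH]; first by rewrite big_ord0. by rewrite big_ord_recr /= IH expnSr. Qed.

Lemma ffact_le_exp n m : n ^_ m <= n ^ m.
Proof.
rewrite ffact_prod -prod_ord_const.
by apply: leq_prod => i _; rewrite leq_subr.
Qed.

Lemma ffact_ge_exp n m : (n - m.-1) ^ m <= n ^_ m.
Proof.
rewrite ffact_prod -prod_ord_const.
apply: leq_prod => i _; apply: leq_sub2l.
by case: m i => [[]//|m] i; rewrite -ltnS ltn_ord.
Qed.

Lemma N6_bound N : 10 <= N -> N ^ 6 <= 64 * N ^_ 6.
Proof.
move=> hN; apply: (leq_trans _ (leq_mul (leqnn 64) (ffact_ge_exp N 6))).
have -> : 64 = 2 ^ 6 by [].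
rewrite -expnMn leq_exp2r //=; lia.
Qed.

Lemma fact_le n : n`! <= n ^ n.
Proof.
elim: n => [|n IH] //; rewrite factS expnS leq_mul //.
apply: (leq_trans IH); case: n {IH} => [|n] //.
by rewrite leq_exp2r.
Qed.

Section Final.
Variable adj : rel 'I_6.
Hypothesis adj_irr : forall i, ~~ adj i i.
Hypothesis adj_tot : forall i j, i != j -> adj i j = ~~ adj j i.
Local Notation HH := (H6 adj_irr adj_tot).
Definition PT r k := pathT (Bt adj_tot r) k.

Lemma INR2 : INR 2 = 2%Re.
Proof. rewrite /=; lra. Qed.

Lemma dH_end r : 0 < r -> (has_twins HH \/ has_nontrivial_aut HH) ->
  Rle (rand_dens HH) (dens HH (PT r (12 * r))).
Proof.
move=> hr hyp.
rewrite /rand_dens dens_eq.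
change (tvcount (PT r (12 * r))) with (12 * r).
change (tvcount HH) with 6.
have -> : (12 * r < 6) = false by apply/negbTE; rewrite -leqNgt; lia.
rewrite (cnt_ext _ (E2 := Bf adj (r:=r))); last by move=> a b /=; rewrite !ltn_ord.
set c := cnt _ _; set D := (12 * r) ^_ 6; set a := aut_card HH.
have Dpos : 0 < D by rewrite ffact_gt0; lia.
have apos : 0 < a := aut_pos _.
have hD : D <= 12 ^ 6 * r ^ 6 by rewrite -expnMn ffact_le_exp.
have key : 6`! * D <= c * a * 2 ^ 15.
  have r6 : r ^ 6 = r * (r * r ^ 4) by rewrite !expnS.
  have e6 : (2 * r) ^ 6 = 64 * r ^ 6 by rewrite expnMn.
  have e4 : (2 * r) ^ 4 = 16 * r ^ 4 by rewrite expnMn.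
  rewrite r6 in hD e6; set x := r ^ 4 in hD e6 e4.
  have -> : 6`! = 720 by [].
  case: hyp => [[u [v [uv [h1 h2]]]] | hna].
    have tw : forall w, w != u -> w != v -> adj u w = adj v w.
      by move=> w wu wv; apply/idP/idP; [apply: h1 | apply: h2].
    have hc : 720 * ((2 * r) ^ 6 + r * r * (2 * r) ^ 4 + r * r * (2 * r) ^ 4) <= c.
      case: (boolP (adj u v)) => huv; first exact: (cnt_twin adj_irr adj_tot hr uv tw huv).
      have huv' : adj v u by rewrite adj_tot ?huv // eq_sym.
      apply: (cnt_twin adj_irr adj_tot hr _ _ huv'); first by rewrite eq_sym.
      by move=> w wv wu; rewrite tw.
    rewrite e6 e4 in hc.
    have : c <= c * a by rewrite leq_pmulr.
    lia.
  have hc := cnt_aut adj_irr adj_tot hr.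
  rewrite e6 in hc.
  have a2 := aut_two hna.
  have : c * 2 <= c * a by rewrite leq_mul2l a2 orbT.
  lia.
have cD : Rlt 0 (INR D) by apply: INR_pos.
have ca : Rlt 0 (INR a) by apply: INR_pos.
have -> : (INR (6`!) / INR a * / 2 ^ 15 = INR (6`!) / (INR a * 2 ^ 15))%Re.
  by field; repeat split; try (apply: pow_nonzero); lra.
apply: div_le => //; first by apply: Rmult_lt_0_compat => //; apply: pow_lt; lra.
rewrite -mult_INR -INR2 -INR_expn -!mult_INR.
by apply: INR_leq; rewrite -mulnA in key.
Qed.


Lemma dH_0 r : ~ transitive_tournament HH -> dens HH (PT r 0) = 0%Re.
Proof.
move=> nT; rewrite dens_eq; case: ifP => // _.
rewrite (@cnt_trans0 HH _ _ nT); first by rewrite /Rdiv Rmult_0_l.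
move=> a b c; rewrite /= ?ltn0 /=; exact: ltn_trans.
Qed.

Lemma t_pos : Rlt 0 (rand_dens HH).
Proof.
rewrite /rand_dens; apply: Rmult_lt_0_compat.
  apply: Rdiv_lt_0_compat; apply: INR_pos; [exact: fact_gt0 | exact: aut_pos].
by apply: Rinv_0_lt_compat; apply: pow_lt; lra.
Qed.

Lemma dH_step r k : k < 12 * r ->
  Rle (Rabs (dens HH (PT r k.+1) - dens HH (PT r k)))
      (INR (6 * (12 * r) ^ 5) / INR ((12 * r) ^_ 6)).
Proof.
move=> hk; rewrite !dens_eq.
change (tvcount (PT r k.+1)) with (12 * r); change (tvcount (PT r k)) with (12 * r).
change (tvcount HH) with 6.
have -> : (12 * r < 6) = false by apply/negbTE; rewrite -leqNgt; lia.
have [s1 s2] := @pathT_step (Bt adj_tot r) HH k hk.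
set c1 := cnt HH _ in s1 s2 *; set c0 := cnt HH _ in s1 s2 *.
set K := 6 * (12 * r) ^ 5; set D := (12 * r) ^_ 6.
have s1' : Rle (INR c1) (INR c0 + INR K) by rewrite -plus_INR; apply: INR_leq.
have s2' : Rle (INR c0) (INR c1 + INR K) by rewrite -plus_INR; apply: INR_leq.
have hD : Rlt 0 (INR D) by apply: INR_pos; rewrite ffact_gt0; lia.
have -> : (INR c1 / INR D - INR c0 / INR D = (INR c1 - INR c0) * / INR D)%Re by field; lra.
rewrite Rabs_mult (Rabs_right (/ INR D)); last by left; apply: Rinv_0_lt_compat.
apply: Rmult_le_compat_r; first by left; apply: Rinv_0_lt_compat.
apply: Rabs_le; lra.
Qed.

Lemma del_bound r : 0 < r ->
  Rle (INR (6 * (12 * r) ^ 5) / INR ((12 * r) ^_ 6)) (INR 384 / INR (12 * r)).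
Proof.
move=> hr; apply: div_le.
- by apply: INR_pos; rewrite ffact_gt0; lia.
- by apply: INR_pos; lia.
rewrite -!mult_INR; apply: INR_leq; rewrite !multE.
have h10 : 10 <= 12 * r by lia. have h' := N6_bound h10.
rewrite -mulnA -expnSr.
have -> : 384 = 6 * 64 by [].
by rewrite -mulnA leq_mul2l h'.
Qed.


Lemma dT_lower r k : 31 <= r ->
  Rle (1 / (INR (32`!) * INR (12 ^ 32))) (dens (Tk 32) (PT r k)).
Proof.
move=> hr; rewrite dens_eq.
change (tvcount (PT r k)) with (12 * r); change (tvcount (Tk 32)) with 32.
have -> : (12 * r < 32) = false by apply/negbTE; rewrite -leqNgt; lia.
have hc : 'C(2 * r, 32) <= cnt (Tk 32) (tadj (PT r k)).
  apply: (@cnt_Tk 32 (2 * r) (12 * r)); first by lia.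
  move=> a b ha hb /=; case: ifP => _ //.
  rewrite /Bf; have -> : p6 a = p6 b.
    by apply: val_inj; rewrite /= !p6E !divn_small.
  by rewrite eqxx.
set c := cnt _ _ in hc *; set D := (12 * r) ^_ 32.
have key : D <= c * (32`! * 12 ^ 32).
  apply: (leq_trans (ffact_le_exp _ _)).
  rewrite mulnA expnMn [12 ^ 32 * _]mulnC leq_mul2r; apply/orP; right.
  apply: (leq_trans _ (leq_mul hc (leqnn _))).
  rewrite bin_ffact; apply: (leq_trans _ (ffact_ge_exp _ _)).
  by rewrite leq_exp2r //; lia.
apply: div_le.
- apply: Rmult_lt_0_compat; apply: INR_pos; [exact: fact_gt0 | by rewrite expn_gt0].
- by apply: INR_pos; rewrite ffact_gt0; lia.
rewrite Rmult_1_l -!mult_INR; apply: INR_leq; by rewrite !multE.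
Qed.

End Final.

Lemma INR_lit (n : nat) : INR n = IZR (Z.of_nat n).
Proof. exact: INR_IZR_INZ. Qed.

Lemma randT_aux (F a T P two : R) : Rlt 0 F -> Rle 1 a -> Rle F P -> Rlt 0 T -> Rlt 0 two ->
  Rlt (P * P * T) two -> Rlt (F / a * / two) (1 / (F * T)).
Proof.
move=> hF ha hFP hT h2 hnum.
have hle : Rle (F / a * / two) (F * / two).
  apply: Rmult_le_compat_r; first by left; apply: Rinv_0_lt_compat.
  rewrite /Rdiv -{2}(Rmult_1_r F); apply: Rmult_le_compat_l; first lra.
  rewrite -Rinv_1; apply: Rinv_le_contravar; lra.
apply: (Rle_lt_trans _ _ _ hle).
have hFF : Rle (F * F * T) (P * P * T).
  apply: Rmult_le_compat_r; first lra.
  apply: Rmult_le_compat; lra.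
have hlt : Rlt (F * F * T) two by lra.
apply: (Rmult_lt_reg_r (two * (F * T))); first by apply: Rmult_lt_0_compat => //; apply: Rmult_lt_0_compat.
have -> : (F * / two * (two * (F * T)) = F * F * T)%Re by field; lra.
have -> : (1 / (F * T) * (two * (F * T)) = two)%Re by field; lra.
exact: hlt.
Qed.

Lemma randT_upper : Rlt (rand_dens (Tk 32)) (1 / (INR (32`!) * INR (12 ^ 32))).
Proof.
rewrite /rand_dens.
change (tvcount (Tk 32)) with 32.
apply: (@randT_aux (INR (32`!)) (INR (aut_card (Tk 32))) (INR (12 ^ 32)) (32 ^ 32) (2 ^ 'C(32, 2))).
- by apply: INR_pos; exact: fact_gt0.
- exact: (INR_leq (aut_pos (Tk 32))).
- have e32 : INR 32 = 32%Re by rewrite INR_lit.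
  by rewrite -e32 -INR_expn; apply: INR_leq; exact: fact_le.
- by apply: INR_pos; rewrite expn_gt0.
- by apply: pow_lt; lra.
rewrite INR_expn INR_lit !pow_IZR -!mult_IZR; apply: IZR_lt; by vm_compute.
Qed.

From Stdlib Require Import ClassicalEpsilon.

Theorem proposition3p2 (H : tournament) :
  tvcount H = 6 ->
  ~ transitive_tournament H ->
  (has_twins H \/ has_nontrivial_aut H) ->
  ~ quasirandom_forcing H.
Proof.
case: H => n adj irr tot /= e; subst n.
move=> nT hyp qf.
have ex : forall n, exists k, Rle (Rabs (dens (H6 irr tot) (PT tot (n + 31) k) - rand_dens (H6 irr tot)))
                                    (INR 384 / INR n.+1).
  move=> n.
  have hr : 0 < n + 31 by rewrite addn_gt0 orbT.
  have p1 : Rlt (dens (H6 irr tot) (PT tot (n + 31) 0)) (rand_dens (H6 irr tot)).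
    by rewrite dH_0 //; exact: t_pos.
  have p2 := dH_end hr hyp.
  have p3 : forall k, k < 12 * (n + 31) ->
     Rle (Rabs (dens (H6 irr tot) (PT tot (n + 31) k.+1) - dens (H6 irr tot) (PT tot (n + 31) k)))
         (INR (6 * (12 * (n + 31)) ^ 5) / INR ((12 * (n + 31)) ^_ 6)).
    by move=> k hk; apply: dH_step.
  have [k [_ hk]] := @ivt_disc (fun k => dens (H6 irr tot) (PT tot (n + 31) k))
      (rand_dens (H6 irr tot)) (INR (6 * (12 * (n + 31)) ^ 5) / INR ((12 * (n + 31)) ^_ 6))
      (12 * (n + 31)) p1 p2 p3.
  exists k; apply: (Rle_trans _ _ _ hk); apply: (Rle_trans _ _ _ (del_bound hr)).
  apply: div_le.
  - by apply: INR_pos; rewrite muln_gt0.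
  - exact: INR_pos.
  rewrite -!mult_INR; apply: INR_leq; rewrite !multE leq_mul2l; apply/orP; right; lia.
pose kf n := proj1_sig (constructive_indefinite_description _ (ex n)).
have hG : forall n, Rle (Rabs (dens (H6 irr tot) (PT tot (n + 31) (kf n)) - rand_dens (H6 irr tot)))
                         (INR 384 / INR n.+1).
  by move=> n; exact: (proj2_sig (constructive_indefinite_description _ (ex n))).
have sz : size_to_infty (fun n => PT tot (n + 31) (kf n)).
  move=> M; exists M => n hn.
  change (tvcount (PT tot (n + 31) (kf n))) with (12 * (n + 31)); lia.
have cvH := cv_bound hG.
have [_ qr] := qf _ sz cvH.
have cvT := qr (Tk 32).
have hgap := randT_upper.
have [N hN] := cvT _ (Rgt_minus _ _ hgap).
have h1 := hN N (le_n N).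
have h2 : Rle (1 / (INR (32`!) * INR (12 ^ 32))) (dens (Tk 32) (PT tot (N + 31) (kf N))).
  by apply: dT_lower; rewrite leq_addl.
move: h1; rewrite /R_dist => h1.
have h3 := Rle_abs (dens (Tk 32) (PT tot (N + 31) (kf N)) - rand_dens (Tk 32)).
lra.
Qed.
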